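(* For every odd positive integer $N$, the sandpile group $G_{\Gamma_N}$ on an $N\times N$ square domain $\Gamma_N\subset\mathbb{Z}^2$ has a cyclic subgroup isomorphic to $\mathbb{Z}/\tfrac{N+1}{2}\mathbb{Z}$, of order $\tfrac{N+1}{2}$.
   Context: An $N\times N$ square domain is a set $\{a,\dots,a+N-1\}\times\{b,\dots,b+N-1\}\subset\mathbb{Z}^2$. For finite $\Gamma\subset\mathbb{Z}^2$, the reduced Laplacian is $(\Delta_\Gamma f)(v)=\sum_{w\in\Gamma,\,w\sim v}f(w)-4f(v)$ (nearest-neighbor adjacency in $\mathbb{Z}^2$; all vertices outside $\Gamma$ are contracted to a sink), and the sandpile group is $G_\Gamma=\mathbb{Z}^\Gamma/\Delta_\Gamma(\mathbb{Z}^\Gamma)$. *)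

(* Defs.v *)
From mathcomp Require Import all_boot all_order all_algebra.
Unset Implicit Arguments.
Import Order.TTheory GRing.Theory Num.Theory.
Local Open Scope ring_scope.

Definition sq_pt (N : nat) (a b : int) (v : 'I_N * 'I_N) : int * int :=
  (a + (v.1 : nat)%:Z, b + (v.2 : nat)%:Z).

Definition Z2adj (p q : int * int) : bool :=
  (`|p.1 - q.1| + `|p.2 - q.2|)%N == 1%N.

(* reduced Laplacian of the square domain (outside vertices contracted to the sink) *)
Definition sq_laplacian (N : nat) (a b : int) (f : 'I_N * 'I_N -> int)
    (v : 'I_N * 'I_N) : int :=
  \sum_(w : 'I_N * 'I_N | Z2adj (sq_pt N a b v) (sq_pt N a b w)) f w - 4 * f v.

(* g lies in the subgroup Delta(Z^Gamma), i.e. g = 0 in the sandpile group *)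
Definition in_lap_image (N : nat) (a b : int) (g : 'I_N * 'I_N -> int) : Prop :=
  exists f : 'I_N * 'I_N -> int, forall v, g v = sq_laplacian N a b f v.

(* The sandpile group G = Z^Gamma / Delta(Z^Gamma) contains a cyclic subgroup
   isomorphic to Z/mZ: some class [x] generates a subgroup with
   k[x] = 0  <->  m | k  (so <[x]> ~= Z/mZ, of order m). *)
Definition sandpile_has_cyclic_subgroup (N : nat) (a b : int) (m : nat) : Prop :=
  exists x : 'I_N * 'I_N -> int,
    forall k : int,
      in_lap_image N a b (fun v => k * x v) <-> (m%:Z %| k)%Z.

(* Main.v *)
Require Import Defs.
From mathcomp Require Import all_boot all_order all_algebra.
From mathcomp Require Import zify ring lra.
Import Order.TTheory GRing.Theory Num.Theory.

Section Aux.
Local Open Scope ring_scope.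
Variable N : nat.
Notation V := ('I_N * 'I_N)%type.

Definition coords (w : V) : int * int := ((w.1 : nat)%:Z, (w.2 : nat)%:Z).
Definition ext (u : V -> int) (p : int * int) : int :=
  \sum_(w : V | coords w == p) u w.

Lemma coords_inj : injective coords.
Proof.
move=> [x1 x2] [y1 y2]; rewrite /coords /= => -[h1 h2].
by congr pair; apply: val_inj.
Qed.

Lemma ext_in u w : ext u (coords w) = u w.
Proof.
rewrite /ext (bigD1 w) //= big1 ?addr0 // => w' /andP[/eqP/coords_inj -> ].
by rewrite eqxx.
Qed.

Lemma ext_out u p : (forall w, coords w != p) -> ext u p = 0.
Proof. by move=> H; rewrite /ext big1 // => w; rewrite (negbTE (H w)). Qed.

Lemma ext_cases u p : ext u p = 0 \/ exists w, coords w = p /\ ext u p = u w.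
Proof.
case: (pickP (fun w => coords w == p)) => [w /eqP Hw|H].
  by right; exists w; split => //; rewrite -Hw ext_in.
by left; apply: ext_out => w; rewrite H.
Qed.

Lemma nbr_sum a b (u : V -> int) v :
  \sum_(w : V | Z2adj (sq_pt N a b v) (sq_pt N a b w)) u w =
  ext u ((v.1 : nat)%:Z + 1, (v.2 : nat)%:Z) + ext u ((v.1 : nat)%:Z - 1, (v.2 : nat)%:Z)
  + ext u ((v.1 : nat)%:Z, (v.2 : nat)%:Z + 1) + ext u ((v.1 : nat)%:Z, (v.2 : nat)%:Z - 1).
Proof.
rewrite /ext big_mkcond [X in X + _ + _ + _]big_mkcond [X in _ + X + _ + _]big_mkcond.
rewrite [X in _ + _ + X + _]big_mkcond [X in _ + _ + _ + X]big_mkcond -!big_split /=.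
apply: eq_bigr => w _.
rewrite /Z2adj /sq_pt /coords /= !xpair_eqE.
set x1 := ((v.1 : nat)%:Z); set x2 := ((v.2 : nat)%:Z);
set y1 := ((w.1 : nat)%:Z); set y2 := ((w.2 : nat)%:Z).
have -> : a + x1 - (a + y1) = x1 - y1 by ring.
have -> : b + x2 - (b + y2) = x2 - y2 by ring.
case: (y1 =P x1 + 1) => H1; case: (y1 =P x1 - 1) => H2; case: (y2 =P x2 + 1) => H3;
case: (y2 =P x2 - 1) => H4; case: (y1 =P x1) => H5; case: (y2 =P x2) => H6;
case: ifP => /eqP H /=; rewrite ?addr0 ?add0r //; lia.
Qed.


Lemma lap_lin a b (c d : int) f g v :
  sq_laplacian N a b (fun w => c * f w + d * g w) v =
  c * sq_laplacian N a b f v + d * sq_laplacian N a b g v.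
Proof. rewrite /sq_laplacian big_split /= -!mulr_sumr; ring. Qed.

Lemma lap_nonpos a b u : (forall v, sq_laplacian N a b u v = 0) -> forall v, u v <= 0.
Proof.
move=> H v0; rewrite leNgt; apply/negP => Hpos.
case: (@arg_maxP _ _ _ v0 xpredT u isT) => m _ Hmax.
set M := u m.
have HM : 0 < M by apply: lt_le_trans Hpos (Hmax v0 isT).
have Pm : (fun w : V => u w == M) m by rewrite /= eqxx.
case: (@arg_minnP _ m (fun w : V => u w == M) (fun w : V => (w.1 : nat)) Pm) => s /eqP Hs Hmin.
have Hle : forall p, ext u p <= M.
  move=> p; case: (ext_cases u p) => [->|[w [_ ->]]]; first by apply: ltW.
  exact: Hmax.
have Hlt : ext u ((s.1 : nat)%:Z - 1, (s.2 : nat)%:Z) < M.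
  case: (ext_cases u ((s.1 : nat)%:Z - 1, (s.2 : nat)%:Z)) => [->//|[w [Hw ->]]].
  have Hw' : u w <= M := Hmax w isT.
  rewrite lt_neqAle Hw' andbT; apply/eqP => Huw.
  have := Hmin w (introT eqP Huw).
  move: Hw; rewrite /coords => -[Hw1 _]; lia.
have := H s; rewrite /sq_laplacian nbr_sum.
have := Hle ((s.1 : nat)%:Z + 1, (s.2 : nat)%:Z).
have := Hle ((s.1 : nat)%:Z, (s.2 : nat)%:Z + 1).
have := Hle ((s.1 : nat)%:Z, (s.2 : nat)%:Z - 1).
move: Hlt; rewrite -/M -Hs.
set e1 := ext u (_ - 1, _). set e2 := ext u (_, _ - 1). set e3 := ext u (_, _ + 1). set e4 := ext u (_ + 1, _). lia.
Qed.

Lemma lap_inj a b u : (forall v, sq_laplacian N a b u v = 0) -> forall v, u v = 0.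
Proof.
move=> H v; apply/eqP; rewrite eq_le (lap_nonpos _ _ _ H) /=.
have H' : forall v, sq_laplacian N a b (fun w => -1 * u w + 0 * u w) v = 0.
  by move=> v'; rewrite lap_lin H; ring.
have := lap_nonpos _ _ _ H' v; lia.
Qed.

Definition hfun (w : V) : int := ((w.1 : nat)%:Z + 1) * ((w.2 : nat)%:Z + 1).
Definition xfun (w : V) : int :=
  (if (w.1 : nat).+1 == N then 2 * ((w.2 : nat)%:Z + 1) else 0) +
  (if (w.2 : nat).+1 == N then 2 * ((w.1 : nat)%:Z + 1) else 0).

Lemma ext_h p : ext hfun p =
  if (0 <= p.1 < N%:Z) && (0 <= p.2 < N%:Z) then (p.1 + 1) * (p.2 + 1) else 0.
Proof.
case: ifP => [/andP[/andP[h1 h2] /andP[h3 h4]]|Hf].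
  have k1 : (absz p.1 < N)%N by lia.
  have k2 : (absz p.2 < N)%N by lia.
  have E : p = coords (Ordinal k1, Ordinal k2).
    by rewrite /coords /= {1}[p]surjective_pairing; congr pair; lia.
  by rewrite E ext_in.
apply: ext_out => w; apply/eqP => Hw; move: Hf; rewrite -Hw /coords /=.
have := ltn_ord w.1; have := ltn_ord w.2; lia.
Qed.

Lemma lap_h a b n v : N.+1 = (n * 2)%N ->
  sq_laplacian N a b hfun v = - (n%:Z * xfun v).
Proof.
move=> Hn; rewrite /sq_laplacian nbr_sum !ext_h /= /xfun /hfun.
have := ltn_ord v.1; have := ltn_ord v.2.
case: v => [i j] /=.
move: (i : nat) (j : nat) => x y hy hx.
repeat case: ifP; nia.
Qed.

End Aux.
Local Open Scope ring_scope.

Theorem lemma3 (N : nat) (a b : int) :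
  odd N -> sandpile_has_cyclic_subgroup N a b N.+1./2.
Proof.
move=> Hodd.
have Hn : N.+1 = (N.+1./2 * 2)%N.
  have := halfK N.+1; rewrite /= Hodd /= subn0 -muln2 => ->; done.
have N0 : (0 < N)%N by case: N Hodd {Hn}.
exists (xfun N) => k; split.
- move=> [f Hf].
  have Hz : forall v, sq_laplacian N a b
      (fun w => (N.+1./2)%:Z * f w + k * hfun N w) v = 0.
    by move=> v; rewrite lap_lin -Hf (@lap_h N a b _ _ Hn); ring.
  have := @lap_inj N a b _ Hz (Ordinal N0, Ordinal N0); rewrite /hfun /= => E.
  apply/dvdzP; exists (- f (Ordinal N0, Ordinal N0)); lia.
- move/dvdzP => [q ->].
  exists (fun w => (- q) * hfun N w + 0 * hfun N w) => v.
  rewrite lap_lin (@lap_h N a b _ _ Hn); ring.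
Qed.
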